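(* Let $\mathbf A\in\mathbb R^{m\times n}$, $\mathbf b\in\mathbb R^m$, $\sigma\ge 0$, and let $\mathbf x^0\in\mathbb R^n$ be an arbitrary vector with $\|\mathbf A\mathbf x^0-\mathbf b\|_2\le\sigma$. Let $\mathcal S$ be the set of indices of the $k$ largest components of $\mathbf x^0$ in magnitude and $\mathcal Z=\{1,\dots,n\}\setminus\mathcal S$. Let $\alpha>\|\mathbf x^0_{\mathcal Z}\|_\infty$ and let $\mathbf x^*$ be the solution of problem (P3). Then $\mathbf h:=\mathbf x^*-\mathbf x^0$ satisfies $$\|\mathbf h_{\mathcal Z}\|_1\le C_3\|\mathbf h_{\mathcal S}\|_1+C_4\|\mathbf x^0_{\mathcal Z}\|_1,\qquad C_3:=\frac{\alpha+\|\mathbf x^0_{\mathcal S}\|_\infty}{\alpha-\|\mathbf x^0_{\mathcal Z}\|_\infty},\quad C_4:=\frac{2\alpha}{\alpha-\|\mathbf x^0_{\mathcal Z}\|_\infty}.$$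
   Context: Problem (P3) is $\min_{\mathbf x\in\mathbb R^n}\{\|\mathbf x\|_1+\frac{1}{2\alpha}\|\mathbf x\|_2^2:\ \|\mathbf A\mathbf x-\mathbf b\|_2\le\sigma\}$ (its solution is unique by strict convexity). For a vector $\mathbf h$ and index set $\mathcal S$, $\mathbf h_{\mathcal S}$ denotes the restriction of $\mathbf h$ to the coordinates in $\mathcal S$. *)

(* Defs.v *)
(* vectors in R^n are column vectors 'cV[R]_n over a real
   closed field R (the paper's R^n is the case R = reals). *)
From HB Require Import structures.
From mathcomp Require Import all_boot all_order all_algebra.
Set Implicit Arguments. Unset Strict Implicit. Unset Printing Implicit Defensive.
Import Order.TTheory GRing.Theory Num.Theory.
Local Open Scope ring_scope.

Definition norm1_on (R : numDomainType) (n : nat) (S : {set 'I_n}) (x : 'cV[R]_n) : R :=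
  \sum_(i in S) `|x i 0|.

Definition norm1 (R : numDomainType) (n : nat) (x : 'cV[R]_n) : R :=
  \sum_i `|x i 0|.

(* ||x_S||_inf (= 0 if S is empty) *)
Definition norminf_on (R : numDomainType) (n : nat) (S : {set 'I_n}) (x : 'cV[R]_n) : R :=
  \big[Num.max/0]_(i in S) `|x i 0|.

Definition norm2 (R : rcfType) (m : nat) (v : 'cV[R]_m) : R :=
  Num.sqrt (\sum_i (v i 0) ^+ 2).

Definition P3_obj (R : rcfType) (n : nat) (alpha : R) (x : 'cV[R]_n) : R :=
  norm1 x + (2 * alpha)^-1 * (norm2 x) ^+ 2.

Definition P3_feasible (R : rcfType) (m n : nat) (A : 'M[R]_(m, n)) (b : 'cV[R]_m)
  (sigma : R) (x : 'cV[R]_n) : Prop :=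
  norm2 (A *m x - b) <= sigma.

Definition P3_solution (R : rcfType) (m n : nat) (A : 'M[R]_(m, n)) (b : 'cV[R]_m)
  (sigma alpha : R) (x : 'cV[R]_n) : Prop :=
  P3_feasible A b sigma x /\
  forall y : 'cV[R]_n, P3_feasible A b sigma y -> P3_obj alpha x <= P3_obj alpha y.

Definition largest_k_support (R : numDomainType) (n : nat) (k : nat)
  (x0 : 'cV[R]_n) (S : {set 'I_n}) : Prop :=
  #|S| = k /\ forall i j, i \in S -> j \notin S -> `|x0 j 0| <= `|x0 i 0|.

(* Main.v *)
Require Import Defs.
From HB Require Import structures.
From mathcomp Require Import all_boot all_order all_algebra.
From mathcomp Require Import ring lra.
Import Order.TTheory GRing.Theory Num.Theory.
Local Open Scope ring_scope.

Lemma coord_bound (R : rcfType) (c x h : R) : 0 < c ->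
  `|x + h| - `|x| - 2 * c * (`|x| * `|h|) <=
  (`|x + h| + c * (x + h) ^+ 2) - (`|x| + c * x ^+ 2).
Proof.
move=> c0.
have H1 : - (`|x| * `|h|) <= x * h.
  by rewrite -normrM lerNl -normrN ler_norm.
have H2 : 0 <= h ^+ 2 by apply: sqr_ge0.
nra.
Qed.

Lemma lemaxr (R : realDomainType) (z x y : R) : z <= x \/ z <= y -> z <= Num.max x y.
Proof. case: (lerP x y) => H [H1|H1] //; [exact: le_trans H1 H | exact: le_trans H1 (ltW H)]. Qed.

Lemma ninf_le (R : realDomainType) n (S : {set 'I_n}) (x : 'cV[R]_n) i :
  i \in S -> `|x i 0| <= norminf_on S x.
Proof.
move=> iS; rewrite /norminf_on.
have : i \in index_enum 'I_n by rewrite mem_index_enum.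
elim: (index_enum 'I_n) => [//|j r IH] /=.
rewrite big_cons inE => /orP [/eqP <-|ir].
  by rewrite iS; apply: lemaxr; left.
have := IH ir; case: (j \in S) => // Hr.
by apply: lemaxr; right.
Qed.

Lemma ninf_ge0 (R : realDomainType) n (S : {set 'I_n}) (x : 'cV[R]_n) :
  0 <= norminf_on S x.
Proof. by rewrite /norminf_on; elim/big_ind: _ => // a b Ha Hb; apply: lemaxr; left. Qed.

Lemma obj_eq (R : rcfType) n (alpha : R) (x : 'cV[R]_n) :
  P3_obj alpha x = \sum_i (`|x i 0| + (2 * alpha)^-1 * x i 0 ^+ 2).
Proof.
rewrite /P3_obj /norm2 sqr_sqrtr; last by apply: sumr_ge0 => i _; apply: sqr_ge0.
by rewrite /norm1 big_split /= mulr_sumr.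
Qed.

Theorem mainTheorem3 (R : rcfType) (m n k : nat) (A : 'M[R]_(m, n)) (b : 'cV[R]_m)
  (sigma alpha : R) (x0 xs : 'cV[R]_n) (S : {set 'I_n}) :
  0 <= sigma ->
  P3_feasible A b sigma x0 ->
  largest_k_support k x0 S ->
  norminf_on (~: S) x0 < alpha ->
  P3_solution A b sigma alpha xs ->
  let h := xs - x0 in
  let C3 := (alpha + norminf_on S x0) / (alpha - norminf_on (~: S) x0) in
  let C4 := (2 * alpha) / (alpha - norminf_on (~: S) x0) in
  norm1_on (~: S) h <= C3 * norm1_on S h + C4 * norm1_on (~: S) x0.
Proof.
move=> _ feas _ aZ [_ opt].
cbv zeta.
set h := xs - x0.
set a := norminf_on (~: S) x0 in aZ *.
set s := norminf_on S x0.
have a0 : 0 <= a by apply: ninf_ge0.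
have s0 : 0 <= s by apply: ninf_ge0.
have al0 : 0 < alpha by apply: le_lt_trans aZ.
set c := (2 * alpha)^-1.
have c0 : 0 < c by rewrite invr_gt0 mulr_gt0.
have ca : 2 * c * alpha = 1 by rewrite /c mulrAC mulfV // mulf_neq0 // gt_eqF.
have Hopt := opt _ feas; rewrite !obj_eq -/c in Hopt.
set NZ := norm1_on (~: S) h; set NS := norm1_on S h; set XZ := norm1_on (~: S) x0.
pose L i := if i \in S then - `|h i 0| - 2 * c * s * `|h i 0|
            else `|h i 0| - 2 * `|x0 i 0| - 2 * c * a * `|h i 0|.
have key : \sum_i L i <= \sum_i ((`|xs i 0| + c * xs i 0 ^+ 2) - (`|x0 i 0| + c * x0 i 0 ^+ 2)).
  apply: ler_sum => i _.
  have xsE : xs i 0 = x0 i 0 + h i 0 by rewrite /h !mxE; ring.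
  rewrite xsE; apply: (le_trans _ (@coord_bound _ _ _ _ c0)).
  have Ht : `|x0 i 0 + h i 0| >= `|h i 0| - `|x0 i 0|.
    have := ler_normD (x0 i 0 + h i 0) (- x0 i 0); rewrite normrN.
    rewrite (_ : x0 i 0 + h i 0 + - x0 i 0 = h i 0); last by ring.
    move=> ?; lra.
  have Hh := normr_ge0 (h i 0).
  have Hx := normr_ge0 (x0 i 0).
  have Ht2 : `|x0 i 0 + h i 0| >= `|x0 i 0| - `|h i 0|.
    have := ler_normD (x0 i 0 + h i 0) (- h i 0); rewrite normrN.
    rewrite (_ : x0 i 0 + h i 0 + - h i 0 = x0 i 0); last by ring.
    move=> ?; lra.
  rewrite /L; case: ifP => iS.
  - have := @ninf_le _ _ _ x0 _ iS; rewrite -/s => Hs.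
    have P : c * (`|x0 i 0| * `|h i 0|) <= c * (s * `|h i 0|).
      by apply: ler_wpM2l; [lra | apply: ler_wpM2r].
    lra.
  - have iZ : i \in ~: S by rewrite in_setC iS.
    have := @ninf_le _ _ _ x0 _ iZ; rewrite -/a => Ha.
    have P : c * (`|x0 i 0| * `|h i 0|) <= c * (a * `|h i 0|).
      by apply: ler_wpM2l; [lra | apply: ler_wpM2r].
    lra.
rewrite sumrB in key.
have L0 : \sum_i L i <= 0 by apply: le_trans key _; rewrite subr_le0.
rewrite (bigID (fun i => i \in S)) /= in L0.
have E1 : \sum_(i | i \in S) L i = - ((1 + 2*c*s) * NS).
  rewrite /NS /norm1_on mulr_sumr -sumrN; apply: eq_bigr => i iS.
  by rewrite /L iS; ring.
have E2 : \sum_(i | i \notin S) L i = (1 - 2*c*a) * NZ - 2 * XZ.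
  rewrite /NZ /XZ /norm1_on !mulr_sumr -sumrB; apply: eq_big => [i|i iS].
    by rewrite in_setC.
  by rewrite /L (negbTE iS); ring.
rewrite E1 E2 in L0.
clear key Hopt E1 E2 opt feas L.
clearbody NZ NS XZ c h a s.
have L1 : alpha * ((1 - 2*c*a) * NZ - 2 * XZ + - ((1 + 2*c*s) * NS)) <= 0.
  by rewrite pmulr_rle0 //; lra.
have E3 : alpha * ((1 - 2*c*a) * NZ - 2 * XZ + - ((1 + 2*c*s) * NS)) =
   (alpha - 2*c*alpha*a)*NZ - 2*alpha*XZ - (alpha + 2*c*alpha*s)*NS by ring.
rewrite E3 ca !mul1r in L1.
have aa : 0 < alpha - a by rewrite subr_gt0.
have L2 : (alpha - a) * NZ <= (alpha + s) * NS + 2 * alpha * XZ by lra.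
have di0 : 0 < (alpha - a)^-1 by rewrite invr_gt0.
have := ler_wpM2l (ltW di0) L2.
rewrite mulrA mulVf ?gt_eqF // mul1r => H.
apply: le_trans H _.
rewrite mulrDr !mulrA.
rewrite [(alpha - a)^-1 * (alpha + s)]mulrC [(alpha - a)^-1 * 2]mulrC.
rewrite -[2 * (alpha - a)^-1 * alpha]mulrA [(alpha - a)^-1 * alpha]mulrC mulrA.
by [].
Qed.
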